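(* Let $n\ge 1$ and $x,y\in S_n$. Then there exist an integer $N$ with $n\leq N\leq n(n+1)/2$ and permutations $v,w\in S_N$ such that $P(v)=P(w)$, $v(i)=w(i)$ for all $i\leq N-n$, and the pattern of $v$ in the last $n$ positions is $x$ and the pattern of $w$ in the last $n$ positions is $y$.
   Context: Permutations are written in one-line notation. $P(w)$ denotes the Robinson--Schensted insertion tableau of $w\in S_N$, obtained by successively column inserting $w(N),w(N-1),\dots,w(1)$ into the empty tableau (column insertion of $a$: place $a$ in the first column, bumping the smallest entry of that column larger than $a$, if any, which is then inserted into the next column in the same way, and so on). For $x\in S_n$ and $v\in S_N$, the pattern of $v$ in the last $n$ positions is $x$ if for all $1\le i<j\le n$: $v(N-n+i)<v(N-n+j)$ if and only if $x(i)<x(j)$. *)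

(* Defs.v *)
From mathcomp Require Import all_boot all_order all_fingroup.
Set Implicit Arguments. Unset Strict Implicit. Unset Printing Implicit Defensive.

(* A tableau is a list of columns (first column first); each column is
   listed from top to bottom. Entries are natural numbers. *)
Definition tableau := seq (seq nat).

Fixpoint col_insert (a : nat) (T : tableau) : tableau :=
  match T with
  | [::] => [:: [:: a]]
  | c :: T' =>
      let bigger := [seq b <- c | a < b] in
      if bigger is b0 :: _ then
        let b := foldr minn b0 bigger in
        [seq (if z == b then a else z) | z <- c] :: col_insert b T'
      else rcons c a :: T'
  end.

Definition oneline (N : nat) (w : 'S_N) : seq nat :=
  [seq (w i).+1 | i <- enum 'I_N].

(* P(w): column insert w(N), w(N-1), ..., w(1) into the empty tableau. *)
Definition Ptab (N : nat) (w : 'S_N) : tableau :=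
  foldr col_insert [::] (oneline w).

(* The pattern of v in its last n positions is x (positions 0-based:
   positions N-n, ..., N-1 correspond to N-n+1, ..., N in the paper). *)
Definition last_pattern (N n : nat) (v : 'S_N) (x : 'S_n) : Prop :=
  forall i j : 'I_n, i < j ->
    (nth 0 (oneline v) (N - n + i) < nth 0 (oneline v) (N - n + j))
    = (x i < x j).

(* Main.v *)
Require Import Defs.
From mathcomp Require Import all_boot all_order all_fingroup.
From mathcomp Require Import zify.
Set Implicit Arguments. Unset Strict Implicit. Unset Printing Implicit Defensive.

Fixpoint ins1 (a : nat) (c : seq nat) : seq nat * option nat :=
  match c with
  | [::] => ([:: a], None)
  | h :: t => if a < h then (a :: t, Some h)
              else let p := ins1 a t in (h :: p.1, p.2)
  end.

Definition ocons (o : option nat) (s : seq nat) := if o is Some b then b :: s else s.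
Definition oins (o : option nat) (T : tableau) := if o is Some b then col_insert b T else T.

Lemma sorted_cons_all h t : sorted ltn (h :: t) -> all (fun z => h < z) t.
Proof. move=> /= H; exact: (order_path_min ltn_trans H). Qed.

Lemma foldr_minn_id h t : all (fun z => h <= z) t -> foldr minn h t = h.
Proof.
elim: t => //= z t IH /andP[hz ht]; rewrite IH //; apply/minn_idPr; done.
Qed.

Lemma ins1_spec a c : sorted ltn c -> a \notin c ->
  (if [seq b <- c | a < b] is b0 :: _ then
     ins1 a c = ([seq (if z == b0 then a else z) | z <- c], Some b0)
   else ins1 a c = (rcons c a, None)).
Proof.
elim: c => [|h t IH] //= Hs.
rewrite in_cons negb_or => /andP[Hah Hat].
have Hall := sorted_cons_all Hs.
have Hst : sorted ltn t := path_sorted Hs.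
case: (ltngtP a h) => Hah'.
- rewrite eqxx; congr (_ :: _, _).
  rewrite -[LHS]map_id; apply/eq_in_map => z Hz.
  by move/allP: Hall => /(_ z Hz) Hz'; rewrite ifN //; lia.
- have := IH Hst Hat.
  case Ef: [seq b <- t | a < b] => [|b0 r] -> //=.
  have : b0 \in [seq b <- t | a < b] by rewrite Ef mem_head.
  rewrite mem_filter => /andP[Hb0 _].
  by rewrite ifN //; lia.
- by move: Hah; rewrite Hah' eqxx.
Qed.

Lemma col_insert_cons a c T : sorted ltn c -> a \notin c ->
  col_insert a (c :: T) = (ins1 a c).1 :: oins (ins1 a c).2 T.
Proof.
move=> Hs Ha; have := ins1_spec Hs Ha; rewrite /=.
case Ef: [seq b <- c | a < b] => [|b0 r] -> //=.
have : sorted ltn (b0 :: r) by rewrite -Ef; apply: sorted_filter => //; exact: ltn_trans.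
move/sorted_cons_all => Hall.
rewrite /= foldr_minn_id ?minnn //.
by apply/allP => z Hz; move/allP: Hall => /(_ z Hz); lia.
Qed.

Lemma sortedE h t : sorted ltn (h :: t) = all (fun z => h < z) t && sorted ltn t.
Proof. by rewrite /= (path_sortedE ltn_trans). Qed.

Lemma ins1_perm a c : perm_eq ((ins1 a c).1 ++ ocons (ins1 a c).2 [::]) (a :: c).
Proof.
elim: c => [|h t IH] //=.
case: ifP => _ /=.
- by rewrite perm_cons cats1 perm_rcons.
- apply: (@perm_trans _ (h :: a :: t)); first by rewrite perm_cons.
  exact/permPl/(perm_catCA [:: h] [:: a] t).
Qed.

Lemma ins1_mem a c z : z \in (ins1 a c).1 -> (z == a) || (z \in c).
Proof.
move=> Hz; have := perm_mem (ins1_perm a c) z; rewrite mem_cat Hz /= in_cons; by move<-.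
Qed.

Lemma bump_gt a c b : (ins1 a c).2 = Some b -> a < b.
Proof.
elim: c => [|h t IH] //=; case: ifP => Hah /=; first by case=> <-.
exact: IH.
Qed.

Lemma bump_mem a c b : (ins1 a c).2 = Some b -> b \in c.
Proof.
move=> Hb; have := perm_mem (ins1_perm a c) b; rewrite mem_cat Hb /= mem_head orbT in_cons => /esym H.
have Hba : b != a by have := bump_gt Hb; lia.
by move: H; rewrite (negbTE Hba).
Qed.

Lemma ins1_sorted a c : sorted ltn c -> a \notin c -> sorted ltn (ins1 a c).1.
Proof.
elim: c => [|h t IH] //= Hs; rewrite in_cons negb_or => /andP[Hah Hat].
move: (Hs); rewrite -/(sorted ltn (h :: t)) sortedE => /andP[Hall Hst].
case: ifP => Ha /=.
- rewrite (path_sortedE ltn_trans) Hst andbT; apply/allP => z Hz.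
  by move/allP: Hall => /(_ z Hz); lia.
- rewrite (path_sortedE ltn_trans) IH // andbT; apply/allP => z /ins1_mem /orP[/eqP->|Hz].
  + by move: Hah Ha; lia.
  + by move/allP: Hall => /(_ z Hz).
Qed.

Lemma bump_le a c z : sorted ltn c -> z \in c -> a < z ->
  exists2 b, (ins1 a c).2 = Some b & b <= z.
Proof.
elim: c => [|h t IH] //= Hs; move: (Hs); rewrite -/(sorted ltn (h :: t)) sortedE => /andP[Hall Hst].
rewrite in_cons => /orP[/eqP->|Hz] Haz.
- by rewrite Haz; exists h.
- case: ifP => Ha /=.
  + by exists h => //; move/allP: Hall => /(_ z Hz); lia.
  + exact: IH.
Qed.

Lemma bump_min a c b w : sorted ltn c -> (ins1 a c).2 = Some b -> w \in c -> a < w -> b <= w.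
Proof. by move=> Hs Hb Hw Haw; case: (bump_le Hs Hw Haw) => b'; rewrite Hb => -[->]. Qed.

Lemma bump_none a c w : sorted ltn c -> (ins1 a c).2 = None -> w \in c -> w <= a.
Proof.
move=> Hs Hb Hw; rewrite leqNgt; apply/negP => Haw.
by case: (bump_le Hs Hw Haw) => b'; rewrite Hb.
Qed.

Lemma none_of_lt a c : (forall w, w \in c -> w < a) -> (ins1 a c).2 = None.
Proof.
elim: c => [|h t IH] //= H.
have := H h (mem_head _ _); case: ifP => Ha; first by lia.
move=> _ /=; apply: IH => w Hw; apply: H; by rewrite in_cons Hw orbT.
Qed.

Lemma ins1_uniq a c : uniq (a :: c) -> uniq ((ins1 a c).1 ++ ocons (ins1 a c).2 [::]).
Proof. by move=> H; rewrite (perm_uniq (ins1_perm a c)). Qed.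

Lemma bump_notin a c b : uniq (a :: c) -> (ins1 a c).2 = Some b -> b \notin (ins1 a c).1.
Proof. by move=> /ins1_uniq; move=> + Hb; rewrite Hb cat_uniq /= andbT orbF => /andP[_ ->]. Qed.

Lemma ins1_memA a c : a \in (ins1 a c).1.
Proof.
elim: c => [|h t IH] /=; first by rewrite mem_head.
by case: ifP => _ /=; rewrite ?mem_head // in_cons IH orbT.
Qed.

Fixpoint sweep (w c : seq nat) : seq nat * seq nat :=
  if w is a :: w' then
    let p := sweep w' c in let q := ins1 a p.1 in (q.1, ocons q.2 p.2)
  else (c, [::]).

Definition krel (t1 t2 : seq nat) : Prop :=
  exists x y z, x < y < z /\
   [\/ t1 = [:: x; z; y] /\ t2 = [:: z; x; y],
       t1 = [:: z; x; y] /\ t2 = [:: x; z; y],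
       t1 = [:: y; z; x] /\ t2 = [:: y; x; z] |
       t1 = [:: y; x; z] /\ t2 = [:: y; z; x]].

Lemma krel_sym t1 t2 : krel t1 t2 -> krel t2 t1.
Proof.
case=> x [y] [z] [H [[-> ->]|[-> ->]|[-> ->]|[-> ->]]]; exists x, y, z; split=> //.
- by constructor 2. - by constructor 1. - by constructor 4. - by constructor 3.
Qed.

Lemma sweep_pass h t w : all (fun a => h < a) w ->
  sweep w (h :: t) = (h :: (sweep w t).1, (sweep w t).2).
Proof.
elim: w => [|a w IH] //= /andP[Ha Hw]; rewrite IH //=.
by rewrite ltnNge (ltnW Ha).
Qed.

Ltac clean := repeat match goal with
 | H : ?P |- _ => lazymatch P with
                  | is_true (leq _ _) => fail
                  | nat => fail
                  | _ => clear H end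
 end.
Ltac lia' := clean; lia.

Ltac dec := repeat (simpl; match goal with
 | |- context [?a < ?b] =>
     assert (E : a < b) by lia'; rewrite E; clear E
 | |- context [?a < ?b] =>
     assert (E : ~~ (a < b)) by lia'; rewrite (negbTE E); clear E
 end); simpl.

Lemma colK_A x y z c : x < y -> y < z -> sorted ltn c ->
  x \notin c -> y \notin c -> z \notin c ->
  (sweep [:: x; z; y] c).1 = (sweep [:: z; x; y] c).1 /\
  ((sweep [:: x; z; y] c).2 = (sweep [:: z; x; y] c).2 \/
   (krel (sweep [:: x; z; y] c).2 (sweep [:: z; x; y] c).2 /\ c != [::])).
Proof.
move=> Hxy Hyz; elim: c => [|h t IH] Hs Hx Hy Hz.
- by dec; split=> //; left.
move: (Hs); rewrite sortedE => /andP[Hall Hst].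
move: Hx Hy Hz; rewrite !in_cons !negb_or => /andP[Hxh Hxt] /andP[Hyh Hyt] /andP[Hzh Hzt].
case: (ltngtP h x) => Hhx; last by move: Hxh; rewrite Hhx eqxx.
- have A1 : all (fun a => h < a) [:: x; z; y] by apply/allP => a; rewrite !inE => /or3P[]/eqP->; lia'.
  have A2 : all (fun a => h < a) [:: z; x; y] by apply/allP => a; rewrite !inE => /or3P[]/eqP->; lia'.
  rewrite !sweep_pass //.
  case: (IH Hst Hxt Hyt Hzt).
  case: (sweep [:: x; z; y] t) => c1 b1; case: (sweep [:: z; x; y] t) => c2 b2 /= -> E2.
  split=> //; by case: E2 => [->|[H _]]; [left|right].
- case: (ltngtP h y) => Hhy; last by move: Hyh; rewrite Hhy eqxx.
  + clear Hxh Hyh Hzh IH Hs. dec; case E0: (ins1 y t) => [t0 r] /=; dec. case E1: (ins1 z t0) => [t1 q] /=; dec.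
    split=> //; case: q E1 => [q0|] E1; last by left.
    right; split=> //.
    have Hq0 : q0 \in t0 by have := bump_mem (c:=t0) (a:=z); rewrite E1; apply.
    have Hzq : z < q0 by have := bump_gt (c:=t0) (a:=z); rewrite E1; apply.
    have Hq0' : q0 \in t.
      have := ins1_mem (a:=y) (c:=t) (z:=q0); rewrite E0 /= => /(_ Hq0) /orP[/eqP|] //; lia'.
    case: r E0 => [r0|] E0; last first.
      have := bump_none (a:=y) Hst; rewrite E0 => /(_ q0 erefl Hq0'); lia'.
    have Hyr : y < r0 by have := bump_gt (c:=t) (a:=y); rewrite E0; apply.
    have Hrq : r0 <= q0 by apply: (bump_min (a:=y) Hst); [rewrite E0|..] => //; lia'.
    have Hrq' : r0 != q0.
      have := bump_notin (a:=y) (c:=t) (b:=r0); rewrite E0 /=.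
      move=> /(_ _ erefl); rewrite /= Hyt (sorted_uniq ltn_trans ltnn Hst) => /(_ erefl).
      by apply: contra => /eqP ->.
    have Hrq2 : r0 < q0 by rewrite ltn_neqAle Hrq' Hrq.
    exists h, r0, q0; split; first by lia'.
    by constructor 1.
  + clear Hxh Hyh Hzh IH Hs. dec; case E2: (ins1 z t) => [t2 q] /=; dec.
    split=> //; case: q E2 => [q0|] E2; last by left.
    right; split=> //.
    have Hq0 : q0 \in t by have := bump_mem (c:=t) (a:=z); rewrite E2; apply.
    have Hhq : h < q0 by move/allP: Hall => /(_ q0 Hq0).
    exists y, h, q0; split; first by lia'.
    by constructor 1.
Qed.

Lemma colK_B x y z c : x < y -> y < z -> sorted ltn c ->
  x \notin c -> y \notin c -> z \notin c ->
  (sweep [:: y; z; x] c).1 = (sweep [:: y; x; z] c).1 /\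
  ((sweep [:: y; z; x] c).2 = (sweep [:: y; x; z] c).2 \/
   (krel (sweep [:: y; z; x] c).2 (sweep [:: y; x; z] c).2 /\ c != [::])).
Proof.
move=> Hxy Hyz; elim: c => [|h t IH] Hs Hx Hy Hz.
- by dec; split=> //; left.
move: (Hs); rewrite sortedE => /andP[Hall Hst].
move: Hx Hy Hz; rewrite !in_cons !negb_or => /andP[Hxh Hxt] /andP[Hyh Hyt] /andP[Hzh Hzt].
case: (ltngtP h x) => Hhx; last by move: Hxh; rewrite Hhx eqxx.
- have A1 : all (fun a => h < a) [:: y; z; x] by apply/allP => a; rewrite !inE => /or3P[]/eqP->; lia'.
  have A2 : all (fun a => h < a) [:: y; x; z] by apply/allP => a; rewrite !inE => /or3P[]/eqP->; lia'.
  rewrite !sweep_pass //.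
  case: (IH Hst Hxt Hyt Hzt).
  case: (sweep [:: y; z; x] t) => c1 b1; case: (sweep [:: y; x; z] t) => c2 b2 /= -> E2.
  split=> //; by case: E2 => [->|[H _]]; [left|right].
- case: (ltngtP h z) => Hhz; last by move: Hzh; rewrite Hhz eqxx.
  + clear Hxh Hyh Hzh IH Hs. dec; case E1: (ins1 z t) => [t1 q] /=; dec.
    case E2: (ins1 y t1) => [t2 b] /=.
    split=> //; case: q E1 => [q0|] E1; last by left.
    right; split=> //.
    have Hq0 : q0 \in t by have := bump_mem (c:=t) (a:=z); rewrite E1; apply.
    have Hzq : z < q0 by have := bump_gt (c:=t) (a:=z); rewrite E1; apply.
    have Hzt1 : z \in t1 by have := ins1_memA z t; rewrite E1.
    have Hst1 : sorted ltn t1 by have := ins1_sorted Hst Hzt; rewrite E1.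
    case: (bump_le (a:=y) Hst1 Hzt1 Hyz) => b0; rewrite E2 /= => Eb Hb0z; subst b.
    have Hb0 : b0 \in t1 by have := bump_mem (c:=t1) (a:=y); rewrite E2; apply.
    have Hhb : h < b0.
      have := ins1_mem (a:=z) (c:=t) (z:=b0); rewrite E1 /= => /(_ Hb0) /orP[/eqP->|] //.
      by move=> H; move/allP: Hall => /(_ b0 H).
    exists h, b0, q0; split; first by lia'.
    by constructor 3.
  + clear Hxh Hyh Hzh IH Hs. case: t Hall Hst Hxt Hyt Hzt => [|h2 t'] Hall Hst Hxt Hyt Hzt.
    * by dec; split=> //; left.
    * have Hh2 : h < h2 by move: Hall => /= /andP[].
      dec; split=> //; right; split=> //.
      exists z, h, h2; split; first by lia'.
      by constructor 1.
Qed.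

Lemma uniq_cat_notin (w c : seq nat) a : uniq (w ++ c) -> a \in w -> a \notin c.
Proof.
rewrite cat_uniq => /and3P[_ /hasPn H _] Ha; apply/negP => Hc.
by have := H a Hc; rewrite Ha.
Qed.

Lemma colK w1 w2 c : sorted ltn c -> uniq (w1 ++ c) -> krel w1 w2 ->
  (sweep w1 c).1 = (sweep w2 c).1 /\
  ((sweep w1 c).2 = (sweep w2 c).2 \/ (krel (sweep w1 c).2 (sweep w2 c).2 /\ c != [::])).
Proof.
move=> Hs Hu [x [y [z [/andP[Hxy Hyz] H]]]].
have Hn a : a \in w1 -> a \notin c by exact: uniq_cat_notin Hu.
have Hw : x \in w1 /\ y \in w1 /\ z \in w1 by case: H => -[-> _]; rewrite !inE !eqxx ?orbT.
case: Hw => /Hn Hx [/Hn Hy /Hn Hz].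
case: H => -[-> ->].
- exact: colK_A.
- have [E1 E2] := colK_A Hxy Hyz Hs Hx Hy Hz; split=> //.
  by case: E2 => [->|[/krel_sym ? ?]]; [left|right].
- exact: colK_B.
- have [E1 E2] := colK_B Hxy Hyz Hs Hx Hy Hz; split=> //.
  by case: E2 => [->|[/krel_sym ? ?]]; [left|right].
Qed.

Definition good (T : tableau) := all (sorted ltn) T && uniq (flatten T).

Lemma col_insert_good a T : good T -> a \notin flatten T ->
  good (col_insert a T) /\ perm_eq (flatten (col_insert a T)) (a :: flatten T).
Proof.
elim: T a => [|c T IH] a HT Ha; first by [].
have /andP[/andP[Hc HTs] Hu] := HT.
have : a \notin c ++ flatten T by [].
rewrite mem_cat negb_or => /andP[Hac HaT].
rewrite col_insert_cons //.
have Hp := ins1_perm a c.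
have Hsc := ins1_sorted Hc Hac.
have Hu1 : uniq (a :: c ++ flatten T) by rewrite /= Hu mem_cat negb_or Hac HaT.
case E: (ins1 a c) => [c1 [b|]] /=; rewrite E /= ?cats0 in Hp Hsc.
- have Hbc : b \in c by have := bump_mem (a:=a) (c:=c); rewrite E; apply.
  have HbT : b \notin flatten T by apply: (uniq_cat_notin Hu).
  have Hu2 : uniq (flatten T) by move: Hu; rewrite cat_uniq => /and3P[].
  have [/andP[HT' Hu'] Hp'] := IH b (introT andP (conj HTs Hu2)) HbT.
  have Hp2 : perm_eq (c1 ++ flatten (col_insert b T)) (a :: c ++ flatten T).
    apply: (perm_trans (y := c1 ++ b :: flatten T)); first by rewrite perm_cat2l.
    by rewrite -cat_rcons -cats1 -cat_cons perm_cat2r.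
  split=> //; rewrite /good /= Hsc (perm_uniq Hp2) Hu1 andbT; exact: HT'.
- have Hp2 : perm_eq (c1 ++ flatten T) (a :: c ++ flatten T).
    by rewrite -cat_cons perm_cat2r.
  split=> //; rewrite /good /= Hsc (perm_uniq Hp2) Hu1 andbT; exact: HTs.
Qed.

Lemma foldr_good T w : good T -> uniq (w ++ flatten T) ->
  good (foldr col_insert T w) /\ perm_eq (flatten (foldr col_insert T w)) (w ++ flatten T).
Proof.
elim: w => [|a w IH] HT Hu /=; first by split.
move: Hu; rewrite /= => /andP[Ha Hu].
have [HT' Hp] := IH HT Hu.
have Ha' : a \notin flatten (foldr col_insert T w) by rewrite (perm_mem Hp).
have [HT2 Hp2] := col_insert_good HT' Ha'.
split=> //; apply: (perm_trans Hp2); by rewrite perm_cons.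
Qed.

Lemma sweep_perm w c : perm_eq ((sweep w c).1 ++ (sweep w c).2) (w ++ c).
Proof.
elim: w => [|a w IH] /=; first by rewrite cats0.
have Hp := ins1_perm a (sweep w c).1.
case: (ins1 a (sweep w c).1) Hp => c1 ob /= Hp.
apply: (perm_trans (y := (c1 ++ ocons ob [::]) ++ (sweep w c).2)).
  by case: ob Hp => [b|] _ /=; rewrite ?cats0 // -cat_rcons cats1.
apply: (perm_trans (y := (a :: (sweep w c).1) ++ (sweep w c).2)); first by rewrite perm_cat2r.
by rewrite cat_cons perm_cons.
Qed.

Lemma oins_foldr ob T bl : oins ob (foldr col_insert T bl) = foldr col_insert T (ocons ob bl).
Proof. by case: ob. Qed.

Lemma foldr_sweep T w : good T -> uniq (w ++ flatten T) -> w != [::] ->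
  foldr col_insert T w =
  (sweep w (head [::] T)).1 :: foldr col_insert (behead T) (sweep w (head [::] T)).2.
Proof.
elim: w => [|a w IH] // HT Hu _.
have Hu' : uniq (w ++ flatten T) by move: Hu => /= /andP[].
have Ha : a \notin w ++ flatten T by move: Hu => /= /andP[].
have [HTw Hpw] := foldr_good HT Hu'.
have Ha' : a \notin flatten (foldr col_insert T w) by rewrite (perm_mem Hpw).
case: w IH Hu Hu' Ha HTw Hpw Ha' => [|a' w'] IH Hu Hu' Ha HTw Hpw Ha'.
- case: T HT {IH Hu Hu' Ha HTw Hpw} Ha' => [|c T] HT Ha'; first by [].
  have Hc : sorted ltn c by move: HT => /andP[/andP[]].
  have Hac : a \notin c by move: Ha'; rewrite /= mem_cat negb_or => /andP[].
  change (col_insert a (c :: T) = (sweep [:: a] c).1 :: foldr col_insert T (sweep [:: a] c).2).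
  rewrite col_insert_cons //=; by case: (ins1 a c) => c1 [b|].
- have E := IH HT Hu' isT.
  change (col_insert a (foldr col_insert T (a' :: w')) = (sweep (a :: a' :: w') (head [::] T)).1 :: foldr col_insert (behead T) (sweep (a :: a' :: w') (head [::] T)).2).
  rewrite E; rewrite E in HTw Ha'.
  have Hc : sorted ltn (sweep (a' :: w') (head [::] T)).1 by move: HTw => /andP[/andP[]].
  have Hac : a \notin (sweep (a' :: w') (head [::] T)).1 by move: Ha'; rewrite /= mem_cat negb_or => /andP[].
  rewrite col_insert_cons // oins_foldr.
  by rewrite [in RHS]/=; case: (ins1 _ _).
Qed.

Lemma krel_nil w1 w2 : krel w1 w2 -> w1 != [::].
Proof. by case=> x [y [z [_ [[->]|[->]|[->]|[->]]]]]. Qed.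

Lemma krel_perm w1 w2 : krel w1 w2 -> perm_eq w1 w2.
Proof.
case=> x [y [z [_ [[-> ->]|[-> ->]|[-> ->]|[-> ->]]]]].
- exact/permPl/(perm_catCA [:: x] [:: z] [:: y]).
- exact/permPl/(perm_catCA [:: z] [:: x] [:: y]).
- by rewrite perm_cons; exact/permPl/(perm_catCA [:: z] [:: x] [::]).
- by rewrite perm_cons; exact/permPl/(perm_catCA [:: x] [:: z] [::]).
Qed.

Lemma knuth_col T w1 w2 : good T -> uniq (w1 ++ flatten T) -> krel w1 w2 ->
  foldr col_insert T w1 = foldr col_insert T w2.
Proof.
elim: T w1 w2 => [|c T IH] w1 w2 HT Hu Hk.
- have Hu2 : uniq (w2 ++ flatten [::]) by rewrite -(perm_uniq (perm_cat (krel_perm Hk) (perm_refl _))).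
  rewrite (foldr_sweep HT Hu (krel_nil Hk)) (foldr_sweep HT Hu2 (krel_nil (krel_sym Hk))) /=.
  by have [-> [->|[_ //]]] := colK (c := [::]) isT Hu Hk.
- have Hu2 : uniq (w2 ++ flatten (c :: T)) by rewrite -(perm_uniq (perm_cat (krel_perm Hk) (perm_refl _))).
  rewrite (foldr_sweep HT Hu (krel_nil Hk)) (foldr_sweep HT Hu2 (krel_nil (krel_sym Hk))) /=.
  have Hc : sorted ltn c by move: HT => /andP[/andP[]].
  have HT' : good T.
    move: HT; rewrite /good /= cat_uniq => /andP[/andP[_ H1] /and3P[_ _ H2]]; by apply/andP.
  have Hwc : uniq (w1 ++ c) by move: Hu; rewrite /= catA cat_uniq => /andP[].
  have [-> [->|[Hk' _]]] := colK Hc Hwc Hk; first by [].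
  congr (_ :: _); apply: IH => //.
  have Hp := sweep_perm w1 c.
  have : uniq (((sweep w1 c).1 ++ (sweep w1 c).2) ++ flatten T).
    by rewrite (perm_uniq (perm_cat Hp (perm_refl _))) -catA.
  by rewrite -catA cat_uniq => /and3P[_ _ ->].
Qed.

Definition Pw (w : seq nat) : tableau := foldr col_insert [::] w.

Definition kstep (w1 w2 : seq nat) : Prop :=
  exists p q t1 t2, krel t1 t2 /\ w1 = p ++ t1 ++ q /\ w2 = p ++ t2 ++ q.

Inductive keq : seq nat -> seq nat -> Prop :=
| keq_refl w : keq w w
| keq_cons w1 w2 w3 : kstep w1 w2 -> keq w2 w3 -> keq w1 w3.

Lemma keq_trans w1 w2 w3 : keq w1 w2 -> keq w2 w3 -> keq w1 w3.
Proof. elim=> // a b c H _ IH H'; apply: keq_cons H (IH H'). Qed.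

Lemma kstep_cat p q w1 w2 : kstep w1 w2 -> kstep (p ++ w1 ++ q) (p ++ w2 ++ q).
Proof.
case=> p' [q' [t1 [t2 [H [-> ->]]]]]; exists (p ++ p'), (q' ++ q), t1, t2.
by rewrite !catA.
Qed.

Lemma keq_cat p q w1 w2 : keq w1 w2 -> keq (p ++ w1 ++ q) (p ++ w2 ++ q).
Proof. elim=> [w|a b c H _ IH]; first exact: keq_refl. exact: keq_cons (kstep_cat p q H) IH. Qed.

Lemma keq_krel t1 t2 : krel t1 t2 -> keq t1 t2.
Proof.
move=> H; apply: (keq_cons (w2 := t2)); last exact: keq_refl.
by exists [::], [::], t1, t2; rewrite !cats0.
Qed.

Lemma kstep_P w1 w2 : kstep w1 w2 -> uniq w1 -> Pw w1 = Pw w2 /\ uniq w2.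
Proof.
case=> p [q [t1 [t2 [H [-> ->]]]]] Hu.
have Hp : perm_eq (p ++ t1 ++ q) (p ++ t2 ++ q).
  by rewrite perm_cat2l perm_cat2r; exact: krel_perm.
split; last by rewrite -(perm_uniq Hp).
rewrite /Pw !foldr_cat; congr (foldr _ _ _).
have Hq : uniq q by move: Hu; rewrite !cat_uniq => /and3P[_ _ /and3P[]].
have Htq : uniq (t1 ++ q) by move: Hu; rewrite cat_uniq => /and3P[].
have Hq0 : uniq (q ++ flatten [::]) by rewrite cats0.
have [HT Hpq] := foldr_good (T := [::]) (w := q) isT Hq0.
rewrite cats0 in Hpq.
apply: knuth_col => //.
by rewrite (perm_uniq (perm_cat (perm_refl t1) Hpq)).
Qed.

Lemma keq_P w1 w2 : keq w1 w2 -> uniq w1 -> Pw w1 = Pw w2.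
Proof.
elim=> // a b c H _ IH Hu; have [-> Hb] := kstep_P H Hu; exact: IH.
Qed.

Lemma bumpA R y x : sorted ltn (y :: R) -> x < y -> keq (y :: R ++ [:: x]) (y :: x :: R).
Proof.
elim: R y => [|r R IH] y Hs Hxy /=; first exact: keq_refl.
move: Hs; rewrite sortedE => /andP[/andP[Hyr _] Hs].
apply: (keq_trans (w2 := y :: r :: x :: R)).
  by have := keq_cat [:: y] [::] (IH r Hs (ltn_trans Hxy Hyr)); rewrite /= ?cats0.
have := keq_cat [::] R (keq_krel (t1 := [:: y; r; x]) (t2 := [:: y; x; r]) _).
apply; exists x, y, r; split; first by rewrite Hxy Hyr.
by constructor 3.
Qed.

Lemma bumpB R1 c x : sorted ltn (rcons R1 c) -> all (fun r => r < x) R1 -> x < c ->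
  keq (R1 ++ [:: c; x]) (c :: R1 ++ [:: x]).
Proof.
elim: R1 => [|r R IH] Hs Ha Hxc /=; first exact: keq_refl.
move: Ha => /= /andP[Hrx Ha].
have Hs' : sorted ltn (rcons R c) by move: Hs => /= /path_sorted.
apply: (keq_trans (w2 := r :: c :: R ++ [:: x])).
  by have := keq_cat [:: r] [::] (IH Hs' Ha Hxc); rewrite /= ?cats0.
case: R Hs Ha IH Hs' => [|m R] Hs Ha IH Hs' /=.
- have := keq_cat [::] [::] (keq_krel (t1 := [:: r; c; x]) (t2 := [:: c; r; x]) _).
  rewrite /= ?cats0; apply; exists r, x, c; split; first by rewrite Hrx Hxc.
  by constructor 1.
- have Hrm : r < m by move: Hs => /= /andP[].
  have Hmc : m < c.
    move: Hs' => /=; rewrite (path_sortedE ltn_trans) => /andP[/allP H _].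
    by apply: H; rewrite mem_rcons mem_head.
  have := keq_cat [::] (R ++ [:: x]) (keq_krel (t1 := [:: r; c; m]) (t2 := [:: c; r; m]) _).
  rewrite /=; apply; exists r, m, c; split; first by rewrite Hrm Hmc.
  by constructor 1.
Qed.

Lemma bump_row R1 c R2 x : sorted ltn (R1 ++ c :: R2) -> all (fun r => r < x) R1 -> x < c ->
  keq (R1 ++ c :: R2 ++ [:: x]) (c :: R1 ++ x :: R2).
Proof.
move=> Hs Ha Hxc.
have [Hs1 Hs2] := cat_sorted2 Hs.
have Hr : sorted ltn (rcons R1 c) by move: Hs; rewrite sorted_cat_cons => /andP[].
apply: (keq_trans (w2 := R1 ++ c :: x :: R2)).
  by have := keq_cat R1 [::] (bumpA Hs2 Hxc); rewrite !cats0.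
have := keq_cat [::] R2 (bumpB Hr Ha Hxc).
by rewrite /= -!catA.
Qed.

Fixpoint tri d := if d is d'.+1 then tri d' + d else 0.
Definition V (p j : nat) := tri (p + j) + j + 1.

Lemma tri_mono d d' : d <= d' -> tri d <= tri d'.
Proof. elim: d' => [|d' IH]; first by rewrite leqn0 => /eqP->. rewrite leq_eqVlt => /orP[/eqP->//|H] /=. have := IH H; lia. Qed.

Lemma V_lt1 p j p' j' : p + j < p' + j' -> V p j < V p' j'.
Proof.
move=> H; rewrite /V.
have : tri (p + j).+1 <= tri (p' + j') by apply: tri_mono.
rewrite /=; lia.
Qed.

Lemma V_lt2 p j p' j' : p + j <= p' + j' -> j < j' -> V p j < V p' j'.
Proof.
rewrite leq_eqVlt => /orP[/eqP E|H] Hj; last exact: V_lt1.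
by rewrite /V E; lia.
Qed.

Lemma sorted_map_iota f s l : (forall j, f j < f j.+1) -> sorted ltn (map f (iota s l)).
Proof.
move=> Hf; elim: l s => [|l IH] s //=.
case: l IH => [|l] IH //= ; rewrite Hf /=; exact: (IH s.+1).
Qed.

Section Stair.
Variable n : nat.

Definition L (a : nat -> bool) i := (n.-1 - i) + a (n.-1 - i).
Definition row (a : nat -> bool) i := [seq V (i.+1 - a j) j | j <- iota 0 (L a i)].
Definition rows a m := [seq row a i | i <- iota m (n - m)].
Definition G a m := flatten (rev (rows a m)).
Definition W a := G a 0.

Lemma G_step a m : m < n -> G a m = G a m.+1 ++ row a m.
Proof.
move=> Hm; rewrite /G /rows.
have -> : n - m = (n - m.+1).+1 by lia.
by rewrite /= rev_cons flatten_rcons.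
Qed.

Lemma G_ext a b m : (forall j, a j = b j) -> G a m = G b m.
Proof.
move=> H; rewrite /G /rows; congr (flatten (rev _)); apply: eq_map => i.
rewrite /row /L H; apply: eq_map => j; by rewrite H.
Qed.

Lemma row_sorted a i : sorted ltn (row a i).
Proof.
apply: sorted_map_iota => j; apply: V_lt2 => //.
by case: (a j); case: (a j.+1); lia.
Qed.


Section Chain.
Variables (a : nat -> bool) (k : nat).
Hypothesis Hk : k < n.
Hypothesis Hak : a k = false.
Let a' := fun j => (j == k) || a j.
Let h := n.-1 - k.

Lemma row_high i : h < i -> i < n -> row a' i = row a i.
Proof.
move=> H1 H2; rewrite /row /L /a'.
have -> : (n.-1 - i == k) = false by apply/negbTE; rewrite /h in H1; lia.
rewrite /=; apply/eq_in_map => j; rewrite mem_iota add0n => Hj.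
have -> : (j == k) = false by apply/negbTE; rewrite /h in H1; move: Hj; case: (a _); lia.
done.
Qed.

Lemma G_high m : h < m -> G a' m = G a m.
Proof.
move=> Hm; rewrite /G /rows; congr (flatten (rev _)); apply/eq_in_map => i.
rewrite mem_iota => /andP[H1 H2]; apply: row_high; lia.
Qed.

Lemma row_h : row a' h = row a h ++ [:: V h k].
Proof.
rewrite /row /L /a'.
have -> : n.-1 - h = k by rewrite /h; lia.
rewrite eqxx Hak /= addn0 addn1 -(addn1 k) iotaD map_cat /= add0n.
congr (_ ++ [:: V _ _]); last by lia.
apply/eq_in_map => j; rewrite mem_iota add0n => Hj.
by have -> : (j == k) = false by apply/negbTE; lia.
Qed.

Lemma row_mid m : m < h ->
  exists R1 R2, [/\ row a m = R1 ++ V m.+1 k :: R2, row a' m = R1 ++ V m k :: R2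
                  & all (fun r => r < V m k) R1].
Proof.
move=> Hm.
have EL : L a' m = L a m.
  rewrite /L /a'; have -> : (n.-1 - m == k) = false by apply/negbTE; rewrite /h in Hm; lia.
  done.
have HL : k < L a m by rewrite /L; rewrite /h in Hm; lia.
have Ei : iota 0 (L a m) = iota 0 k ++ k :: iota k.+1 (L a m - k.+1).
  have -> : L a m = k + (L a m - k.+1).+1 by lia.
  rewrite iotaD add0n /=; congr (_ ++ _ :: iota _ _); lia.
exists [seq V (m.+1 - a j) j | j <- iota 0 k],
       [seq V (m.+1 - a j) j | j <- iota k.+1 (L a m - k.+1)]; split.
- by rewrite /row Ei map_cat /= Hak subn0.
- rewrite /row EL Ei map_cat /= /a' eqxx /= subn1 /=; congr (_ ++ _ :: _).
  + apply/eq_in_map => j; rewrite mem_iota add0n => Hj.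
    by have -> : (j == k) = false by apply/negbTE; lia.
  + apply/eq_in_map => j; rewrite mem_iota => /andP[Hj _].
    by have -> : (j == k) = false by apply/negbTE; lia.
- apply/allP => r /mapP[j]; rewrite mem_iota add0n => /andP[_ Hj] ->.
  by apply: V_lt2 => //; case: (a j); lia.
Qed.

Lemma chain_gen d : d <= h -> keq (G a (h - d) ++ [:: V (h - d) k]) (G a' (h - d)).
Proof.
have Hh : h < n by rewrite /h; lia.
elim: d => [|d IH] Hd.
- rewrite subn0 (G_step a Hh) (G_step a' Hh) row_h G_high ?ltnSn // -catA; exact: keq_refl.
- set m := h - d.+1.
  have Hm : m < h by rewrite /m; lia.
  have Hm1 : m.+1 = h - d by rewrite /m; lia.
  have Hmn : m < n by lia.
  have [R1 [R2 [E1 E2 HR1]]] := row_mid Hm.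
  rewrite (G_step a Hmn) (G_step a' Hmn) E1 E2.
  apply: (keq_trans (w2 := G a m.+1 ++ V m.+1 k :: R1 ++ V m k :: R2)).
    have Hs : sorted ltn (R1 ++ V m.+1 k :: R2) by rewrite -E1; exact: row_sorted.
    have := keq_cat (G a m.+1) [::] (bump_row Hs HR1 (V_lt1 (p := m) (j := k) (p' := m.+1) (j' := k) (ltnSn _))).
    by rewrite !cats0 -!catA.
  have := keq_cat [::] (R1 ++ V m k :: R2) (IH (ltnW Hd)).
  by rewrite -Hm1 /= -!catA.
Qed.

Lemma chain_one : keq (W a ++ [:: V 0 k]) (W a').
Proof. have := chain_gen (leqnn h); by rewrite subnn. Qed.

End Chain.

End Stair.

Lemma chain_list n a l : uniq l -> all (fun j => j < n) l -> (forall j, j \in l -> a j = false) ->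
  keq (W n a ++ map (V 0) l) (W n (fun j => (j \in l) || a j)).
Proof.
elim: l a => [|k l IH] a Hu Hl Ha /=.
- rewrite cats0 /W (@G_ext n (fun j => (j \in [::]) || a j) a 0) //; exact: keq_refl.
- move: Hu Hl => /andP[Hkl Hu] /andP[Hkn Hl].
  have Hak : a k = false by apply: Ha; rewrite mem_head.
  apply: (keq_trans (w2 := W n (fun j => (j == k) || a j) ++ map (V 0) l)).
    have := keq_cat [::] (map (V 0) l) (chain_one Hkn Hak).
    by rewrite /= -catA.
  have := IH (fun j => (j == k) || a j) Hu Hl.
  have H : forall j, j \in l -> (j == k) || a j = false.
    move=> j Hj; rewrite Ha ?in_cons ?Hj ?orbT // orbF; apply/negbTE.
    by apply: contraNneq Hkl => <-.
  move=> /(_ H); rewrite /W (@G_ext n (fun j => (j \in l) || ((j == k) || a j))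
                                   (fun j => (j \in k :: l) || a j)) //.
  by move=> j; rewrite in_cons; case: (j == k); case: (j \in l).
Qed.

Lemma V_inj p j p' j' : V p j = V p' j' -> p = p' /\ j = j'.
Proof.
move=> E.
case: (ltngtP (p + j) (p' + j')) => Hd.
- by have := V_lt1 Hd; rewrite E ltnn.
- by have := V_lt1 Hd; rewrite E ltnn.
- case: (ltngtP j j') => Hj.
  + by have := V_lt2 (eq_leq Hd) Hj; rewrite E ltnn.
  + by have := V_lt2 (eq_leq (esym Hd)) Hj; rewrite E ltnn.
  + split=> //; lia.
Qed.

Lemma memG n a m x : x \in G n a m ->
  exists i j, [/\ m <= i, i < n, j < L n a i & x = V (i.+1 - a j) j].
Proof.
rewrite /G /rows => /flattenP[r]; rewrite mem_rev => /mapP[i]; rewrite mem_iota => /andP[H1 H2] ->.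
move=> /mapP[j]; rewrite mem_iota add0n => Hj ->.
exists i, j; split=> //; lia.
Qed.

Lemma G0_uniq n d : d <= n -> uniq (G n (fun _ => false) (n - d)).
Proof.
elim: d => [|d IH] Hd.
- by rewrite subn0 /G /rows subnn.
- have Hm : n - d.+1 < n by lia.
  rewrite (G_step _ Hm) cat_uniq.
  have -> : (n - d.+1).+1 = n - d by lia.
  rewrite IH ?(ltnW Hd) //= (sorted_uniq ltn_trans ltnn (row_sorted _ _ _)) andbT.
  apply/hasPn => z /mapP[j _] -> /=; apply/negP => /memG [i [j' [H1 H2 H3 E]]].
  have := V_inj E; rewrite !subn0 => -[Hi _]; lia.
Qed.

Lemma G0_size n d : d <= n -> size (G n (fun _ => false) (n - d)) = tri d.-1.
Proof.
elim: d => [|d IH] Hd.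
- by rewrite subn0 /G /rows subnn.
- have Hm : n - d.+1 < n by lia.
  rewrite (G_step _ Hm) size_cat.
  have -> : (n - d.+1).+1 = n - d by lia.
  rewrite IH ?(ltnW Hd) // /row size_map size_iota /L /= addn0.
  case: d IH Hd Hm => [|d] IH Hd Hm /=; lia.
Qed.

Lemma tri2 n : tri n * 2 = n * n.+1.
Proof. elim: n => [|n IH] //=; rewrite mulnDl IH; lia. Qed.

Lemma tri_div n : n * (n + 1) %/ 2 = tri n.
Proof. by rewrite addn1 -tri2 mulnK. Qed.

Lemma tri_ge n : n <= tri n.
Proof. elim: n => [|n IH] //=; lia. Qed.

Lemma V_bound p j n : p + j < n -> V p j <= tri n.
Proof.
move=> H; rewrite /V.
have := tri_mono H; rewrite /=; lia.
Qed.

Lemma V0_mono a b : (V 0 a < V 0 b) = (a < b).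
Proof.
apply/idP/idP => H; last exact: V_lt1.
rewrite ltnNge; apply/negP => Hba.
move: Hba; rewrite leq_eqVlt => /orP[/eqP E|Hba]; first by move: H; rewrite E ltnn.
by have := V_lt1 (p := 0) (p' := 0) Hba; lia.
Qed.

Lemma nth_oneline N (v : 'S_N) (i : 'I_N) : nth 0 (oneline v) i = (v i).+1.
Proof.
by rewrite /oneline (nth_map i) ?size_enum_ord ?ltn_ord // nth_ord_enum.
Qed.

Lemma mk_perm N w : size w = N -> uniq w -> all (fun x => 0 < x <= N) w ->
  exists v : 'S_N, oneline v = w.
Proof.
move=> Hs Hu Ha.
have Hlt : forall i : 'I_N, (nth 0 w i).-1 < N.
  move=> i; have : nth 0 w i \in w by rewrite mem_nth // Hs.
  by move/(allP Ha) => /andP[H1 H2]; lia.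
pose f := fun i : 'I_N => Ordinal (Hlt i).
have finj : injective f.
  move=> i j /(congr1 val) /= E; apply/val_inj/eqP.
  have Hi : nth 0 w i \in w by rewrite mem_nth // Hs.
  have Hj : nth 0 w j \in w by rewrite mem_nth // Hs.
  move/(allP Ha): Hi => /andP[Hi _]; move/(allP Ha): Hj => /andP[Hj _].
  have E2 : nth 0 w i = nth 0 w j by lia.
  by rewrite -(nth_uniq 0 _ _ Hu) ?Hs ?ltn_ord // E2.
exists (perm finj).
rewrite /oneline.
have -> : [seq (perm finj i).+1 | i <- enum 'I_N] = [seq nth 0 w i | i <- map val (enum 'I_N)].
  rewrite -map_comp; apply: eq_map => i /=; rewrite permE /=.
  have : nth 0 w i \in w by rewrite mem_nth // Hs.
  by move/(allP Ha) => /andP[H1 _]; lia.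
by rewrite val_enum_ord -Hs -/(mkseq _ _) mkseq_nth.
Qed.

Definition lperm n (s : 'S_n) : seq nat := [seq nat_of_ord (s i) | i <- enum 'I_n].

Lemma lperm_nth n (s : 'S_n) (i : 'I_n) : nth 0 (lperm s) i = s i.
Proof. by rewrite /lperm (nth_map i) ?size_enum_ord ?ltn_ord // nth_ord_enum. Qed.

Lemma lperm_mem n (s : 'S_n) j : (j \in lperm s) = (j < n).
Proof.
apply/mapP/idP => [[i _ ->]//|Hj].
exists (s^-1 (Ordinal Hj))%g; first by rewrite mem_enum.
by rewrite permKV.
Qed.

Lemma lperm_uniq n (s : 'S_n) : uniq (lperm s).
Proof.
rewrite /lperm map_inj_uniq ?enum_uniq // => i j /val_inj; exact: perm_inj.
Qed.

Lemma lperm_size n (s : 'S_n) : size (lperm s) = n.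
Proof. by rewrite size_map size_enum_ord. Qed.

Lemma u_size n : 1 <= n -> size (W n (fun _ => false)) = tri n - n.
Proof.
move=> Hn; have := G0_size (leqnn n); rewrite subnn /W => ->.
case: n Hn => [|n] //= _; lia.
Qed.

Lemma u_mem n z : z \in W n (fun _ => false) -> exists i j, [/\ i < n, j < n.-1 - i & z = V i.+1 j].
Proof.
move=> /memG [i [j [_ H1 H2 ->]]]; exists i, j; split=> //.
by move: H2; rewrite /L addn0.
Qed.

Lemma word_props n (s : 'S_n) : 1 <= n ->
  let w := W n (fun _ => false) ++ map (V 0) (lperm s) in
  [/\ size w = tri n, uniq w, all (fun z => 0 < z <= tri n) w & Pw w = Pw (W n (fun j => j < n))].
Proof.
move=> Hn w.
have Hu : uniq (W n (fun _ => false)) by have := G0_uniq (leqnn n); rewrite subnn.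
have Hw : uniq w.
  rewrite cat_uniq Hu map_inj_uniq ?lperm_uniq ?andbT; last by move=> a b /V_inj [].
  apply/hasPn => z /mapP[j _ ->]; apply/negP => /u_mem [i [j' [_ _ E]]].
  by have [] := V_inj E.
split=> //.
- by rewrite size_cat u_size // size_map lperm_size subnK // tri_ge.
- apply/allP => z; rewrite mem_cat => /orP[/u_mem [i [j [Hi Hj ->]]]|/mapP[j]].
  + apply/andP; split; [by rewrite /V addn1 | apply: V_bound; lia].
  + rewrite lperm_mem => Hj ->; apply/andP; split; [by rewrite /V addn1 | apply: V_bound; lia].
- have Hall : all (fun j => j < n) (lperm s) by apply/allP => j; rewrite lperm_mem.
  have H := chain_list (n := n) (a := fun _ => false) (lperm_uniq s) Hall (fun _ _ => erefl).
  rewrite (keq_P H Hw) /W (@G_ext n _ (fun j => j < n) 0) //.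
  by move=> j; rewrite lperm_mem orbF.
Qed.

Unset Implicit Arguments.

Theorem proposition2p6 (n : nat) (x y : 'S_n) :
  1 <= n ->
  exists N : nat, n <= N <= (n * (n + 1)) %/ 2 /\
    exists v w : 'S_N,
      [/\ Ptab v = Ptab w,
          (forall i : 'I_N, i < N - n -> v i = w i),
          last_pattern v x
        & last_pattern w y].
Proof.
move=> Hn.
have [Sx Ux Ax Px] := word_props x Hn.
have [Sy Uy Ay Py] := word_props y Hn.
have [v Hv] := mk_perm Sx Ux Ax.
have [w Hw] := mk_perm Sy Uy Ay.
exists (tri n); split; first by rewrite tri_div leqnn tri_ge.
exists v, w; split.
- by rewrite /Ptab Hv Hw -/(Pw _) -/(Pw _) Px Py.
- move=> i Hi; apply/val_inj/eqP; rewrite -eqSS -!nth_oneline Hv Hw !nth_cat u_size // Hi.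
  done.
- move=> i j Hij; rewrite Hv !nth_cat u_size // !ltnNge !leq_addr /= !addKn.
  by rewrite !(nth_map 0) ?lperm_size ?ltn_ord // !lperm_nth -!ltnNge V0_mono.
- move=> i j Hij; rewrite Hw !nth_cat u_size // !ltnNge !leq_addr /= !addKn.
  by rewrite !(nth_map 0) ?lperm_size ?ltn_ord // !lperm_nth -!ltnNge V0_mono.
Qed.
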